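(* Let $T=(T,\eta,\mu)$ be a Kock–Zöberlein monad on a poset-enriched category $\mathcal{A}$, let $a\colon T(X)\to X$ be a $T$-algebra, and let $c\colon X\to T(X)$ be a map of algebras from $a$ to $\overline{T}(a)=\mu_X$ (i.e. $c\circ a=\mu_X\circ T(c)$). The following are equivalent: (1) $c$ is an Eilenberg–Moore coalgebra of the comonad $\overline{T}$ on $a$ (i.e. additionally $a\circ c=\mathrm{id}_X$ and $T(\eta_X)\circ c=T(c)\circ c$); (2) $a\circ c=\mathrm{id}_X$ and $c\circ a\le\mathrm{id}_{T(X)}$, i.e. $c$ is a left adjoint right inverse of the counit $a$ (a coreflection $c\dashv a$).
   Context: A poset-enriched category has hom-posets with monotone composition; $f\dashv g$ means $\mathrm{id}\le g\circ f$ and $f\circ g\le\mathrm{id}$. A monad $T$ is Kock–Zöberlein if it is monotone on hom-posets and $T(\eta_X)\le\eta_{T(X)}$ for all $X$. $\overline{T}$ is the comonad on the category of $T$-algebras (also poset-enriched) induced by the free-algebra adjunction: $\overline{T}(a)=\mu_X\colon T^2X\to TX$ for $a\colon TX\to X$, with counit $a\colon\overline{T}(a)\to a$ and comultiplication $T(\eta_X)$. *)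

(* Defs.v *)
Set Implicit Arguments.
Unset Strict Implicit.

Record PosCat := {
  Ob :> Type;
  Hom : Ob -> Ob -> Type;
  idm : forall X, Hom X X;
  comp : forall X Y Z, Hom Y Z -> Hom X Y -> Hom X Z;  (* comp g f = g o f *)
  comp_id_l : forall X Y (f : Hom X Y), comp (idm Y) f = f;
  comp_id_r : forall X Y (f : Hom X Y), comp f (idm X) = f;
  comp_assoc : forall X Y Z W (h : Hom Z W) (g : Hom Y Z) (f : Hom X Y),
      comp h (comp g f) = comp (comp h g) f;
  hle : forall X Y, Hom X Y -> Hom X Y -> Prop;
  hle_refl : forall X Y (f : Hom X Y), hle f f;
  hle_trans : forall X Y (f g h : Hom X Y), hle f g -> hle g h -> hle f h;
  hle_antisym : forall X Y (f g : Hom X Y), hle f g -> hle g f -> f = g;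
  comp_mono : forall X Y Z (g g' : Hom Y Z) (f f' : Hom X Y),
      hle g g' -> hle f f' -> hle (comp g f) (comp g' f')
}.

Arguments idm {C} X : rename.
Arguments comp {C X Y Z} g f : rename.
Arguments hle {C X Y} f g : rename.

Record Monad (C : PosCat) := {
  T0 : C -> C;
  T1 : forall X Y : C, @Hom C X Y -> @Hom C (T0 X) (T0 Y);
  T1_id : forall X : C, T1 (idm X) = idm (T0 X);
  T1_comp : forall X Y Z : C, forall (g : @Hom C Y Z) (f : @Hom C X Y),
      T1 (comp g f) = comp (T1 g) (T1 f);
  eta : forall X : C, @Hom C X (T0 X);
  mu : forall X : C, @Hom C (T0 (T0 X)) (T0 X);
  eta_nat : forall (X Y : C) (f : @Hom C X Y), comp (eta Y) f = comp (T1 f) (eta X);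
  mu_nat : forall (X Y : C) (f : @Hom C X Y),
      comp (mu Y) (T1 (T1 f)) = comp (T1 f) (mu X);
  mu_eta_l : forall X : C, comp (mu X) (eta (T0 X)) = idm (T0 X);
  mu_eta_r : forall X : C, comp (mu X) (T1 (eta X)) = idm (T0 X);
  mu_assoc : forall X : C, comp (mu X) (T1 (mu X)) = comp (mu X) (mu (T0 X))
}.

Arguments T0 {C} m X : rename.
Arguments T1 {C} m {X Y} f : rename.
Arguments eta {C} m X : rename.
Arguments mu {C} m X : rename.

Definition KZ {C : PosCat} (M : Monad C) : Prop :=
  (forall X Y (f g : @Hom C X Y), hle f g -> hle (T1 M f) (T1 M g)) /\
  (forall X, hle (T1 M (eta M X)) (eta M (T0 M X))).

Definition is_T_algebra {C : PosCat} (M : Monad C) (X : C)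
    (a : @Hom C (T0 M X) X) : Prop :=
  comp a (eta M X) = idm X /\ comp a (T1 M a) = comp a (mu M X).

Definition is_alg_map_to_free {C : PosCat} (M : Monad C) (X : C)
    (a : @Hom C (T0 M X) X) (c : @Hom C X (T0 M X)) : Prop :=
  comp c a = comp (mu M X) (T1 M c).

(* c is an Eilenberg–Moore coalgebra of the comonad Tbar on a
   (counit a, comultiplication T(eta_X)). *)
Definition is_Tbar_coalgebra {C : PosCat} (M : Monad C) (X : C)
    (a : @Hom C (T0 M X) X) (c : @Hom C X (T0 M X)) : Prop :=
  comp a c = idm X /\ comp (T1 M (eta M X)) c = comp (T1 M c) c.

(* Main.v *)
Require Import Defs.

Section S.
Variables (C : PosCat) (M : Monad C).

Lemma le_compl X Y Z (g : @Hom C Y Z) (f f' : @Hom C X Y) :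
  hle f f' -> hle (comp g f) (comp g f').
Proof. intro H. apply comp_mono; [apply hle_refl|exact H]. Qed.
Lemma le_compr X Y Z (g g' : @Hom C Y Z) (f : @Hom C X Y) :
  hle g g' -> hle (comp g f) (comp g' f).
Proof. intro H. apply comp_mono; [exact H|apply hle_refl]. Qed.

Lemma Teta_mu (HK : KZ M) X :
  hle (comp (T1 M (eta M X)) (mu M X)) (idm _).
Proof.
  destruct HK as [Hm Hk].
  rewrite <- (mu_nat M (eta M X)).
  rewrite <- (mu_eta_r M (T0 M X)).
  apply le_compl. apply Hm. apply Hk.
Qed.
End S.

Theorem theorem4p2 (C : PosCat) (M : Monad C) (X : C)
    (a : @Hom C (T0 M X) X) (c : @Hom C X (T0 M X)) :
  KZ M -> is_T_algebra a -> is_alg_map_to_free a c ->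
  (is_Tbar_coalgebra a c <->
   (comp a c = idm X /\ hle (comp c a) (idm (T0 M X)))).
Proof.
  intros HK [Ha1 Ha2] Hc. pose proof HK as [Hm Hk].
  split.
  - intros [H1 H2]. split; [exact H1|].
    assert (Hce : hle c (eta M X)).
    { assert (E : c = comp (T1 M a) (comp (T1 M c) c)).
      { rewrite comp_assoc, <- T1_comp, H1, T1_id, comp_id_l. reflexivity. }
      apply hle_trans with (comp (T1 M a) (comp (T1 M c) c)); [rewrite <- E; apply hle_refl|]. rewrite <- H2.
      apply hle_trans with (comp (T1 M a) (comp (eta M (T0 M X)) c)).
      + apply le_compl. apply le_compr. apply Hk.
      + rewrite comp_assoc, <- eta_nat, <- comp_assoc, H1, comp_id_r. apply hle_refl. }
    rewrite Hc. rewrite <- (mu_eta_r M X). apply le_compl. apply Hm. exact Hce.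
  - intros [H1 H2]. split; [exact H1|].
    assert (Hce : hle c (eta M X)).
    { apply hle_trans with (comp (idm _) c); [rewrite comp_id_l; apply hle_refl|].
      apply hle_trans with (comp (comp c a) (eta M X)).
      - rewrite <- comp_assoc, Ha1, comp_id_r, comp_id_l. apply hle_refl.
      - apply hle_trans with (comp (idm _) (eta M X)); [apply le_compr; exact H2|rewrite comp_id_l; apply hle_refl]. }
    apply hle_antisym.
    + apply hle_trans with (comp (T1 M (eta M X)) (comp c (comp a c))); [rewrite H1, comp_id_r; apply hle_refl|].
      rewrite (comp_assoc c a c), Hc, comp_assoc, comp_assoc.
      apply le_compr.
      apply hle_trans with (comp (idm _) (T1 M c)); [|rewrite comp_id_l; apply hle_refl].
      apply le_compr. apply Teta_mu. exact HK.
    + apply le_compr. apply Hm. exact Hce.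
Qed.
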